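(* Let $\lambda_1\ge\lambda_2\ge\dots\ge\lambda_p\ge0$ satisfy $3\lambda_1^2\le\Lambda^2:=\sum_{j=1}^p\lambda_j^2$, and define $h_j(t)=(1+\lambda_j^2t^2)^{-1/4}$ for $j=1,\dots,p$. Then \[ \int_0^\infty\prod_{j=1}^p h_j(t)\,dt\le\frac{C}{\Lambda} \] for an absolute constant $C$. *)

(* Defs.v *)
From HB Require Import structures.
From mathcomp Require Import all_boot all_order all_algebra.
From mathcomp Require Import all_classical all_reals all_analysis.
Set Implicit Arguments. Unset Strict Implicit. Unset Printing Implicit Defensive.
Import Order.TTheory GRing.Theory Num.Theory.
Local Open Scope ring_scope.

Definition hfun {R : realType} (l t : R) : R :=
  (1 + l ^+ 2 * t ^+ 2) `^ (- (1 / 4)).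

Definition prodh {R : realType} (p : nat) (lam : 'I_p -> R) (t : R) : R :=
  \prod_(j < p) hfun (lam j) t.

Definition bigLam {R : realType} (p : nat) (lam : 'I_p -> R) : R :=
  Num.sqrt (\sum_(j < p) lam j ^+ 2).

(* Main.v *)
Require Import Defs.
From HB Require Import structures.
From mathcomp Require Import all_boot all_order all_algebra.
From mathcomp Require Import all_classical all_reals all_analysis.
From mathcomp Require Import ring lra measurable_realfun.
Import Order.TTheory GRing.Theory Num.Theory.
Import numFieldNormedType.Exports.
Local Open Scope ring_scope.
Local Open Scope classical_set_scope.

Section Helpers.
Variable R : realType.

Lemma bern (th B : R) : 0 <= th <= 1 -> 0 <= B -> (1 + B) `^ th <= 1 + th * B.
Proof.
move=> /andP[t0 t1] B0.
have B1 : 0 < 1 + B by rewrite ltr_wpDr.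
rewrite /powR gt_eqF //.
have := @convex_expR R (Itv01 t0 t1) (ln (1 + B)) 0.
rewrite !convRE /= lnK ?posrE // expR0 mulr0 addr0 mulr1 => H.
apply: (le_trans H); rewrite /unstable.onem; lra.
Qed.

Lemma ln_lower (a B : R) : 0 <= a <= B -> 0 < B -> a / B * ln (1 + B) <= ln (1 + a).
Proof.
move=> /andP[a0 aB] B0.
have th01 : 0 <= a / B <= 1.
  apply/andP; split; first exact: divr_ge0 a0 (ltW B0).
  by rewrite ler_pdivrMr // mul1r.
have := @bern _ _ th01 (ltW B0).
rewrite mulrVK ?unitfE ?gt_eqF // => H.
rewrite -ln_powR; rewrite ler_ln ?posrE ?powR_gt0 //; lra.
Qed.
Lemma prodh_bound n (lam : 'I_n.+1 -> R) (t : R) :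
    (forall i, 0 <= lam i) ->
    (forall i j : 'I_n.+1, (i <= j)%N -> lam j <= lam i) ->
    3 * lam ord0 ^+ 2 <= bigLam lam ^+ 2 ->
    0 < bigLam lam -> 0 <= t ->
    prodh lam t <= 2 * (1 + bigLam lam / 2 * t) `^ (- (3 / 2)).
Proof.
move=> l0 lmon l3 L0 t0.
set L := bigLam lam.
have LE : L ^+ 2 = \sum_(j < n.+1) lam j ^+ 2.
  by rewrite /L /bigLam sqr_sqrtr // sumr_ge0 // => i _; rewrite sqr_ge0.
have [->|tpos] := eqVneq t 0.
  rewrite /prodh big1; last by move=> j _; rewrite /hfun expr0n /= mulr0 addr0 powR1.
  by rewrite mulr0 addr0 powR1; lra.
have {tpos} tpos : 0 < t by rewrite lt_def tpos t0.
set B := L ^+ 2 * t ^+ 2 / 3.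
have B0 : 0 < B by rewrite /B !mulr_gt0 ?exprn_gt0.
have pos1 x : 0 <= x -> 0 < 1 + x by move=> x0; rewrite ltr_wpDr.
have hE j : hfun (lam j) t = expR (- (1/4) * ln (1 + lam j ^+ 2 * t ^+ 2)).
  by rewrite /hfun /powR gt_eqF // pos1 // mulr_ge0 // sqr_ge0.
rewrite /prodh (eq_bigr _ (fun j _ => hE j)) -expR_sum -mulr_sumr.
have aB j : 0 <= lam j ^+ 2 * t ^+ 2 <= B.
  apply/andP; split; first by rewrite mulr_ge0 // sqr_ge0.
  have h1 : lam j <= lam ord0 by apply: lmon.
  have h2 := l0 j.
  have h3 : lam j ^+ 2 <= lam ord0 ^+ 2 by rewrite ler_sqr // ?nnegrE ?(le_trans h2 h1).
  apply: (le_trans (ler_wpM2r (sqr_ge0 t) h3)).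
  have T0 : 0 <= t ^+ 2 by rewrite sqr_ge0.
  move: T0 l3; rewrite /B; set T := t ^+ 2; set a := lam ord0 ^+ 2; set b := L ^+ 2.
  move=> T0 l3; nra.
have S1 : 3 * ln (1 + B) <= \sum_(j < n.+1) ln (1 + lam j ^+ 2 * t ^+ 2).
  apply: (@le_trans _ _ (\sum_(j < n.+1) (lam j ^+ 2 * t ^+ 2 / B * ln (1 + B)))).
    rewrite -mulr_suml -mulr_suml -mulr_suml -LE /B.
    have Lt : L ^+ 2 * t ^+ 2 != 0 by rewrite mulf_neq0 // expf_neq0 // gt_eqF.
    rewrite (_ : L ^+ 2 * t ^+ 2 / (L ^+ 2 * t ^+ 2 / 3) = 3) //; by field; rewrite !gt_eqF.
  apply: Num.Theory.ler_sum => j _; apply: ln_lower => //.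
set u := L / 2 * t.
have u0 : 0 <= u by rewrite /u mulr_ge0 // divr_ge0 // ltW.
have sq : (1 + u) ^+ 2 <= 2 * (1 + B).
  have -> : B = (u ^+ 2) * 4 / 3 by rewrite /B /u; field.
  have := sqr_ge0 (1 - u); have := sqr_ge0 u; nra.
have lsq : 2 * ln (1 + u) <= ln 2 + ln (1 + B).
  have pu : 0 < 1 + u by rewrite pos1.
  have pB : 0 < 1 + B by rewrite pos1 // ltW.
  rewrite -lnM ?posrE // mulr_natl -lnXn //.
  by rewrite ler_ln ?posrE ?mulr_gt0 ?exprn_gt0.
have l2 : 0 <= ln (2 : R) by rewrite ln_ge0 // ler1n.
have e2 y : 2 * expR y = expR (ln 2 + y) by rewrite expRD lnK // posrE.
rewrite /powR gt_eqF ?pos1 // e2 ler_expR.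
lra.
Qed.
Lemma dpow (s r x : R) : 0 < 1 + s * x ->
  is_derive x 1 ((@powR R ^~ r) \o (fun x => 1 + s * x)) (r * (1 + s * x) `^ (r - 1) * s).
Proof.
move=> px.
have h1 : is_derive x 1 (fun x : R => 1 + s * x) s.
  by apply: is_derive_eq; rewrite add0r mul1r; exact: mulr1.
have h2 := @is_derive1_powR R r (1 + s * x) px.
exact: (@is_derive1_comp R (@powR R ^~ r) (fun x => 1 + s * x) x _ _ h2 h1).
Qed.

Lemma meas_h (l : R) : measurable_fun [set: R] (hfun l).
Proof.
have -> : hfun l = ((@powR R)^~ (-(1/4))) \o (fun t => 1 + l ^+ 2 * t ^+ 2) by [].
apply: measurableT_comp => //.
apply: measurable_funD => //; apply: measurable_funM => //.
Qed.


Lemma int_major (s : R) : 0 < s ->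
  (\int[lebesgue_measure]_(x in `[0%R, +oo[) (2 * (1 + s * x) `^ (-(3/2)))%:E = (4 / s)%:E)%E.
Proof.
move=> s0.
pose f : R -> R := fun x => 2 * (1 + s * x) `^ (-(3/2)).
pose F : R -> R := fun x => -(4/s) * (1 + s * x) `^ (-(2^-1)).
have px (x : R) : 0 <= x -> 0 < 1 + s * x by move=> x0; rewrite ltr_wpDr // mulr_ge0 // ltW.
have dF (x : R) : 0 <= x -> is_derive x 1 F (f x).
  move=> x0.
  have h := dpow s (-(2^-1)) x (px x x0).
  have -> : F = (-(4/s)) \*: ((@powR R ^~ (-(2^-1))) \o (fun x => 1 + s * x)) by [].
  apply: is_derive_eq.
  rewrite /f (_ : -(2^-1) - 1 = -(3/2) :> R); last by field.
  rewrite /GRing.scale /=; field; exact: lt0r_neq0.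
have df (x : R) : 0 <= x -> is_derive x 1 f (2 * ((-(3/2)) * (1 + s * x) `^ (-(3/2) - 1) * s)).
  move=> x0.
  have h := dpow s (-(3/2)) x (px x x0).
  have -> : f = 2 \*: ((@powR R ^~ (-(3/2))) \o (fun x => 1 + s * x)) by [].
  exact: is_deriveZ.
have -> : (\int[lebesgue_measure]_(x in `[0%R, +oo[) (2 * (1 + s * x) `^ (-(3/2)))%:E =
    \int[lebesgue_measure]_(x in `[0%R, +oo[) (f x)%:E)%E by [].
rewrite (@ge0_continuous_FTC2y R f F 0 0).
- by rewrite /F /= mulr0 addr0 powR1 mulr1 -EFinB sub0r opprK.
- by move=> x x0; rewrite /f mulr_ge0 // powR_ge0.
- apply/continuous_within_itvcyP; split.
    move=> x; rewrite in_itv /= andbT => x0.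
    apply: differentiable_continuous; apply/derivable1_diffP.
    by case: (df x (ltW x0)).
  apply: cvg_at_right_filter; apply: differentiable_continuous; apply/derivable1_diffP.
  by case: (df 0 (lexx 0)).
- apply/cvgrPdist_le => e e0.
  have s0' : s != 0 by exact: lt0r_neq0.
  set K := 4 / s / e.
  have K0 : 0 <= K by rewrite /K !divr_ge0 // ltW.
  near=> x.
  have xM : K ^+ 2 / s <= x by near: x; apply: nbhs_pinfty_ge; rewrite num_real.
  have x0 : 0 <= x by apply: le_trans xM; rewrite divr_ge0 ?sqr_ge0 // ltW.
  have p1 := px x x0.
  have p1' := ltW p1.
  have s4 : 0 <= 4 / s by rewrite divr_ge0 // ltW.
  rewrite sub0r normrN /F /= powRN powR12_sqrt // normrM normrN.
  rewrite (ger0_norm s4) ger0_norm ?invr_ge0 ?sqrtr_ge0 //.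
  rewrite ler_pdivrMr ?sqrtr_gt0 //.
  have hK : K <= Num.sqrt (1 + s * x).
    rewrite -(ger0_norm K0) -sqrtr_sqr ler_sqrt ?ltW //.
    have : K ^+ 2 <= s * x by rewrite -ler_pdivrMl.
    lra.
  have -> : 4 / s = e * K by rewrite /K; field; rewrite s0' lt0r_neq0.
  by rewrite ler_wpM2l // ltW.
- by move=> x x0; case: (dF x (ltW x0)).
- have h0 : {for (0:R), continuous F}.
    apply: differentiable_continuous; apply/derivable1_diffP.
    by case: (dF 0 (lexx 0)).
  exact: cvg_at_right_filter h0.

- move=> x; rewrite in_itv /= andbT => x0; rewrite derive1E.
  by case: (dF x (ltW x0)) => _ ->.
Unshelve. all: by end_near.
Qed.
End Helpers.

Theorem lemmaA2 (R : realType) :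
  exists C : R, 0 < C /\
  forall (n : nat) (lam : 'I_n.+1 -> R),
    (forall i, 0 <= lam i) ->
    (forall i j : 'I_n.+1, (i <= j)%N -> lam j <= lam i) ->
    3 * lam ord0 ^+ 2 <= bigLam lam ^+ 2 ->
    0 < bigLam lam ->
    (\int[lebesgue_measure]_(t in `[0%R, +oo[%classic) (prodh lam t)%:E <=
       (C / bigLam lam)%:E)%E.
Proof.
exists 8; split; first by rewrite ltr0n.
move=> n lam l0 lmon l3 L0.
have s0 : 0 < bigLam lam / 2 by rewrite divr_gt0.
have -> : 8 / bigLam lam = 4 / (bigLam lam / 2).
  by field; rewrite lt0r_neq0.
rewrite -(@int_major R _ s0).
apply: ge0_le_integral => //.
- by move=> t _; rewrite lee_fin /prodh prodr_ge0 // => j _; rewrite /hfun powR_ge0.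
- apply/measurable_EFinP; apply: measurable_funTS.
  by apply: measurable_prod => j _; exact: (@meas_h R).
- apply/measurable_EFinP; apply: measurable_funTS.
  apply: measurable_funM => //.
  have -> : (fun x : R => (1 + bigLam lam / 2 * x) `^ (- (3 / 2))) =
     ((@powR R)^~ (-(3/2))) \o (fun x => 1 + bigLam lam / 2 * x) by [].
  apply: measurableT_comp => //; apply: measurable_funD => //; exact: measurable_funM.
- move=> t; rewrite /= in_itv /= andbT => t0.
  by rewrite lee_fin; apply: (@prodh_bound R).
Qed.
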